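(* Let $m,n$ be integers, let $G=\langle a,b\mid a w_k^n b=w_k^{n+1}\rangle$ where $w_k=(ab^{-1})^m ab(a^{-1}b)^m$, and let $r=w_k^n(ab^{-1})^m$. Then $G=\langle a,b\mid r=\overleftarrow{r}\rangle$.
   Context: For a word $u$ in the free group $F_{a,b}$, $\overleftarrow{u}$ denotes the word obtained from $u$ by writing its letters in reversed order (e.g. $\overleftarrow{ab^{-1}}=b^{-1}a$). The group $G$ is the link group $\pi_1(S^3-J(k,l))$ of the double twist link with $k=2m+1$, $l=2n+1$. *)

(* Defs.v *)
From mathcomp Require Import all_boot all_algebra.
Set Implicit Arguments. Unset Strict Implicit. Unset Printing Implicit Defensive.

Inductive gen := Ga | Gb.

(* a letter is a generator together with an exponent sign: false = x, true = x^-1 *)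
Definition letter := (gen * bool)%type.
Definition word := seq letter.

Definition ltr_inv (x : letter) : letter := (x.1, ~~ x.2).
Definition winv (w : word) : word := rev (map ltr_inv w).
Definition wrev (w : word) : word := rev w.

Fixpoint wpow_nat (w : word) (k : nat) : word :=
  if k is k'.+1 then w ++ wpow_nat w k' else [::].
Definition wpow (w : word) (z : int) : word :=
  match z with
  | Posz k => wpow_nat w k
  | Negz k => wpow_nat (winv w) k.+1
  end.

Definition wa : word := [:: (Ga, false)].
Definition wb : word := [:: (Gb, false)].

(* Word equality in the group <a, b | l = r>: the congruence on words generated
   by free cancellation and by replacing a subword l by r. Two presentations on
   the same generators define the same group iff these congruences coincide. *)
Inductive pres_eq (l r : word) : word -> word -> Prop :=
| pe_refl u : pres_eq l r u u
| pe_sym u v : pres_eq l r u v -> pres_eq l r v u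
| pe_trans u v w : pres_eq l r u v -> pres_eq l r v w -> pres_eq l r u w
| pe_free u v x : pres_eq l r (u ++ x :: ltr_inv x :: v) (u ++ v)
| pe_rel u v : pres_eq l r (u ++ l ++ v) (u ++ r ++ v).

Local Open Scope ring_scope.

Definition w_k (m : int) : word :=
  wpow (wa ++ winv wb) m ++ wa ++ wb ++ wpow (winv wa ++ wb) m.

Definition r_word (m n : int) : word := wpow (w_k m) n ++ wpow (wa ++ winv wb) m.

(* Main.v *)
Require Import Defs.
From mathcomp Require Import all_boot all_algebra zify.
From Stdlib Require Import Setoid Morphisms.
Local Open Scope ring_scope.

Lemma ltr_invK : involutive ltr_inv. Proof. by case=> g []. Qed.
Lemma winv_cat u v : winv (u ++ v) = winv v ++ winv u.
Proof. by rewrite /winv map_cat rev_cat. Qed.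
Lemma winvK : involutive winv.
Proof. move=> w; rewrite /winv map_rev revK; exact: (mapK ltr_invK). Qed.
Lemma wrev_cat u v : wrev (u ++ v) = wrev v ++ wrev u.
Proof. exact: rev_cat. Qed.
Lemma wrev_winv w : wrev (winv w) = winv (wrev w).
Proof. by rewrite /wrev /winv map_rev. Qed.

Lemma wpow_nat_S w k : wpow_nat w k.+1 = wpow_nat w k ++ w.
Proof.
elim: k => [|k IH]; first by rewrite /= cats0.
change (w ++ wpow_nat w k.+1 = (w ++ wpow_nat w k) ++ w). by rewrite IH catA.
Qed.
Lemma winv_wpow_nat w k : winv (wpow_nat w k) = wpow_nat (winv w) k.
Proof. elim: k => [|k IH] //=. by rewrite winv_cat IH -wpow_nat_S. Qed.
Lemma winv_wpow w z : winv (wpow w z) = wpow (winv w) z.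
Proof. case: z => k; exact: winv_wpow_nat. Qed.
Lemma wrev_wpow_nat w k : wrev (wpow_nat w k) = wpow_nat (wrev w) k.
Proof. elim: k => [|k IH] //=. by rewrite wrev_cat IH -wpow_nat_S. Qed.
Lemma wrev_wpow w z : wrev (wpow w z) = wpow (wrev w) z.
Proof.
case: z => k; first exact: wrev_wpow_nat.
change (wrev (wpow_nat (winv w) k.+1) = wpow_nat (winv (wrev w)) k.+1).
by rewrite wrev_wpow_nat wrev_winv.
Qed.

Section Free.
Variables l r : word.
Notation E := (pres_eq l r).

#[local] Instance E_equiv : Equivalence E.
Proof. split; [move=> ?; exact: pe_refl | move=> ??; exact: pe_sym | move=> ???; exact: pe_trans]. Qed.

Lemma E_congr s t u v : E u v -> E (s ++ u ++ t) (s ++ v ++ t).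
Proof.
elim=> {u v} [u|u v _ IH|u v w _ IH1 _ IH2|u v x|u v].
- reflexivity.
- by symmetry.
- by transitivity (s ++ v ++ t).
- have -> : s ++ (u ++ x :: ltr_inv x :: v) ++ t = (s ++ u) ++ x :: ltr_inv x :: (v ++ t) by rewrite -!catA.
  have -> : s ++ (u ++ v) ++ t = (s ++ u) ++ (v ++ t) by rewrite -!catA.
  exact: pe_free.
- have -> : s ++ (u ++ l ++ v) ++ t = (s ++ u) ++ l ++ (v ++ t) by rewrite -!catA.
  have -> : s ++ (u ++ r ++ v) ++ t = (s ++ u) ++ r ++ (v ++ t) by rewrite -!catA.
  exact: pe_rel.
Qed.

Lemma E_cat u u' v v' : E u u' -> E v v' -> E (u ++ v) (u' ++ v').
Proof.
move=> Hu Hv; transitivity (u' ++ v); first exact (E_congr [::] v _ _ Hu).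
have := E_congr u' [::] _ _ Hv; by rewrite !cats0.
Qed.

#[local] Instance cat_proper : Proper (E ==> E ==> E) (@cat letter).
Proof. move=> u u' Hu v v' Hv; exact: E_cat. Qed.

Lemma cancR w t : E (w ++ winv w ++ t) t.
Proof.
elim: w t => [|x w IH] t; first reflexivity.
have -> : winv (x :: w) = winv w ++ [:: ltr_inv x] := winv_cat [:: x] w.
rewrite -catA.
transitivity (x :: ltr_inv x :: t); last exact: (pe_free l r [::] t x).
exact (E_cat [:: x] [:: x] _ _ (pe_refl _ _ _) (IH _)).
Qed.

Lemma cancL w t : E (winv w ++ w ++ t) t.
Proof. have := cancR (winv w) t; by rewrite winvK. Qed.
Lemma cancR0 w : E (w ++ winv w) [::].
Proof. have := cancR w [::]; by rewrite cats0. Qed.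
Lemma cancL0 w : E (winv w ++ w) [::].
Proof. have := cancL w [::]; by rewrite cats0. Qed.

Lemma winv_E u v : E u v -> E (winv u) (winv v).
Proof.
elim=> {u v} [u|u v _ IH|u v w _ IH1 _ IH2|u v x|u v].
- reflexivity.
- by symmetry.
- by transitivity (winv v).
- change (u ++ x :: ltr_inv x :: v) with (u ++ [:: x; ltr_inv x] ++ v).
  rewrite !winv_cat.
  have -> : winv [:: x; ltr_inv x] = winv [:: ltr_inv x] ++ [:: ltr_inv x] := winv_cat [:: x] [:: ltr_inv x].
  rewrite cancL0 cats0; reflexivity.
- rewrite !winv_cat; apply: E_cat; last reflexivity; apply: E_cat; first reflexivity.
  transitivity (winv l ++ r ++ winv r); first by rewrite cancR0 cats0; reflexivity.
  transitivity (winv l ++ l ++ winv r); first by symmetry; exact: (pe_rel l r (winv l) (winv r)).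
  rewrite cancL; reflexivity.
Qed.

Lemma wpow_nat_E u v k : E u v -> E (wpow_nat u k) (wpow_nat v k).
Proof. move=> H; elim: k => [|k IH] /=; [reflexivity | exact: E_cat]. Qed.

Lemma wpow_E u v z : E u v -> E (wpow u z) (wpow v z).
Proof. case: z => k H; apply: wpow_nat_E; [exact: H | exact: winv_E]. Qed.

Lemma wpow_nat_conj g w k : E (wpow_nat (g ++ w ++ winv g) k) (g ++ wpow_nat w k ++ winv g).
Proof.
elim: k => [|k IH] /=; first by symmetry; exact: cancR0.
rewrite IH -!catA cancL; reflexivity.
Qed.

Lemma wpow_conj g w z : E (wpow (g ++ w ++ winv g) z) (g ++ wpow w z ++ winv g).
Proof.
case: z => k; first exact: wpow_nat_conj.
change (E (wpow_nat (winv (g ++ w ++ winv g)) k.+1) (g ++ wpow_nat (winv w) k.+1 ++ winv g)).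
rewrite !winv_cat winvK -catA; exact: wpow_nat_conj.
Qed.

Lemma wpow_comm w z : E (w ++ wpow w z) (wpow w z ++ w).
Proof.
case: z => k.
  change (E (wpow_nat w k.+1) (wpow_nat w k ++ w)); rewrite -wpow_nat_S; reflexivity.
change (E (w ++ wpow_nat (winv w) k.+1) (wpow_nat (winv w) k.+1 ++ w)).
transitivity (wpow_nat (winv w) k); first exact: (cancR w (wpow_nat (winv w) k)).
rewrite wpow_nat_S -catA cancL0 cats0; reflexivity.
Qed.

Lemma wpow_commt w z t : E (w ++ wpow w z ++ t) (wpow w z ++ w ++ t).
Proof. rewrite !catA wpow_comm; reflexivity. Qed.

Lemma wpow_succ w z : E (wpow w (z + 1)) (w ++ wpow w z).
Proof.
case: z => [k|[|k]].
- have -> : Posz k + 1 = Posz k.+1 by rewrite -addn1 PoszD.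
  reflexivity.
- symmetry; exact: (cancR w [::]).
- have -> : Negz k.+1 + 1 = Negz k by rewrite !NegzE; lia.
  symmetry; exact: (cancR w _).
Qed.

End Free.

Section Main.
Variables (l r A B : word) (m n : int).
Notation E := (pres_eq l r).
Notation x := (A ++ winv B).
Notation c := (wpow (A ++ winv B) m).
Notation W := (wpow (A ++ winv B) m ++ A ++ B ++ wpow (winv A ++ B) m).
Notation Wn := (wpow W n).
Existing Instance E_equiv.
Existing Instance cat_proper.

Lemma winv_c : winv c = wpow (B ++ winv A) m.
Proof. by rewrite winv_wpow winv_cat winvK. Qed.

Lemma K1 : E (wpow (winv A ++ B) m) (winv A ++ winv c ++ A).
Proof.
have h : E (winv A ++ B) (winv A ++ (B ++ winv A) ++ winv (winv A)).
  rewrite winvK -!catA cancL0 cats0; reflexivity.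
rewrite (wpow_E _ _ _ _ _ h) wpow_conj winv_c winvK; reflexivity.
Qed.

Lemma K2 : E W (c ++ A ++ winv c ++ B).
Proof.
rewrite K1 winv_c (catA B (winv A)) (wpow_commt _ _ (B ++ winv A)) -!catA cancL0 cats0.
reflexivity.
Qed.

Lemma K2' : E W (x ++ c ++ B ++ winv c ++ B).
Proof.
rewrite K2 (wpow_commt _ _ (A ++ winv B)) -!catA cancL; reflexivity.
Qed.

Lemma K4 : E (wpow (winv B ++ A) m) (winv B ++ c ++ B).
Proof.
have h : E (winv B ++ A) (winv B ++ (A ++ winv B) ++ winv (winv B)).
  rewrite winvK -!catA cancL0 cats0; reflexivity.
rewrite (wpow_E _ _ _ _ _ h) wpow_conj winvK; reflexivity.
Qed.

Hypotheses (hA : wrev A = A) (hB : wrev B = B).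

Lemma K3 : E (wrev W) ((winv c ++ B) ++ W ++ winv (winv c ++ B)).
Proof.
rewrite !wrev_cat !wrev_wpow !wrev_cat wrev_winv hA hB -winv_c wrev_winv hB K4.
rewrite winv_cat winvK K2 -!catA cancR cancL0 cats0.
rewrite (catA A (winv B)) (wpow_commt _ _ (A ++ winv B)) -!catA cancL0 cats0; reflexivity.
Qed.

Lemma F1 : E (A ++ Wn ++ B) (x ++ (B ++ Wn ++ B) ++ [::]).
Proof. rewrite cats0 -!catA (cancL _ _ B); reflexivity. Qed.

Lemma F2 : E (wpow W (n + 1)) (x ++ (c ++ B ++ winv c ++ B ++ Wn) ++ [::]).
Proof.
rewrite cats0; transitivity (W ++ Wn); first exact: wpow_succ.
have H := E_cat _ _ _ _ _ _ K2' (pe_refl l r Wn).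
rewrite -!catA in H; rewrite -!catA; exact H.
Qed.

Lemma F3 : E (Wn ++ c) (winv B ++ (B ++ Wn ++ B) ++ (winv B ++ c)).
Proof. rewrite -!catA (cancL _ _ B) (cancR _ _ B); reflexivity. Qed.

Lemma F4 : E (wrev (Wn ++ c)) (winv B ++ (c ++ B ++ winv c ++ B ++ Wn) ++ (winv B ++ c)).
Proof.
rewrite wrev_cat !wrev_wpow (wrev_cat A (winv B)) wrev_winv hA hB K4.
rewrite (wpow_E _ _ _ _ n K3) wpow_conj (winv_cat (winv c) B) winvK -!catA; reflexivity.
Qed.

End Main.

Lemma sub_pres L R L' R' : pres_eq L' R' L R -> forall u v, pres_eq L R u v -> pres_eq L' R' u v.
Proof.
move=> H u v; elim=> {u v} [u|u v _ IH|u v w _ IH1 _ IH2|u v y|u v].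
- exact: pe_refl.
- exact: pe_sym.
- exact: pe_trans IH2.
- exact: pe_free.
- exact: E_congr.
Qed.

Lemma transfer L R P Q s t :
  (forall l r, pres_eq l r L (s ++ P ++ t)) -> (forall l r, pres_eq l r R (s ++ Q ++ t)) ->
  forall u v, pres_eq L R u v <-> pres_eq P Q u v.
Proof.
move=> HL HR u v; split; apply: sub_pres.
- apply: pe_trans (HL _ _) _; apply: pe_trans (pe_sym (HR _ _)).
  exact: pe_rel.
- have e1 : forall w, pres_eq L R (winv s ++ (s ++ w ++ t) ++ winv t) w.
    move=> w; rewrite -!catA.
    apply: pe_trans (cancL L R s _) _.
    apply: pe_trans (E_cat L R _ _ _ _ (pe_refl L R w) (cancR0 L R t)) _.
    rewrite cats0; exact: pe_refl.
  apply: pe_trans (pe_sym (e1 P)) _; apply: pe_trans (e1 Q).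
  apply: E_cat; first exact: pe_refl.
  apply: E_cat; last exact: pe_refl.
  apply: pe_trans (pe_sym (HL _ _)) _; apply: pe_trans (HR _ _).
  have := pe_rel L R [::] [::]; rewrite !cats0; exact.
Qed.

Theorem lemma3p2 (m n : int) :
  forall u v : word,
    pres_eq (wa ++ wpow (w_k m) n ++ wb) (wpow (w_k m) (n + 1)) u v <->
    pres_eq (r_word m n) (wrev (r_word m n)) u v.
Proof.
move=> u v.
apply: iff_trans (transfer _ _ _ _ _ _ (fun l r => F1 l r wa wb m n) (fun l r => F2 l r wa wb m n) u v) _.
apply: iff_sym.
exact: (transfer _ _ _ _ _ _ (fun l r => F3 l r wa wb m n) (fun l r => F4 l r wa wb m n (erefl wa) (erefl wb)) u v).
Qed.
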